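(* Consider a cellular network with $n$ base stations $\mathcal{N}=\{1,\dots,n\}$, base station $i$ serving a nonempty set $\mathcal{J}_i$ of users (pairwise disjoint), channel gains $g_{kj}>0$, noise power $\sigma^2>0$, and $$f_i(\mathbf{x};\mathbf{r},\mathbf{p})=\sum_{j\in\mathcal{J}_i}\frac{r_{ij}}{\log\Big(1+\frac{p_i g_{ij}}{\sum_{k\ne i} p_k g_{kj} x_k+\sigma^2}\Big)}.$$ Fix a satisfiable rate vector $\mathbf{r}>\mathbf{0}$. Consider two load vectors $\mathbf{x},\mathbf{x}'>\mathbf{0}$ with $\mathbf{x}'\ge\mathbf{x}$ and $\mathbf{x}'\ne\mathbf{x}$. If $\mathbf{x}$ is implementable, then $\mathbf{x}'$ is implementable. Moreover, the respective corresponding power vectors $\mathbf{p}$ and $\mathbf{p}'$ (i.e., $\mathbf{x}=\mathbf{f}(\mathbf{x};\mathbf{r},\mathbf{p})$ and $\mathbf{x}'=\mathbf{f}(\mathbf{x}';\mathbf{r},\mathbf{p}')$) satisfy $\mathbf{p}'<\mathbf{p}$ componentwise.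
   Context: Vector inequalities are componentwise; $\log$ is natural logarithm. A rate vector $\mathbf{r}$ is satisfiable if $\rho(\mathbf{\Lambda}(\mathbf{r}))<1$, where $\rho$ is the spectral radius and $\mathbf{\Lambda}(\mathbf{r})$ has entries $\lambda_{ii}=0$ and $\lambda_{ik}=\sum_{j\in\mathcal{J}_i}g_{kj}r_{ij}/g_{ij}$ for $i\ne k$. Given satisfiable $\mathbf{r}$, a load $\mathbf{x}>\mathbf{0}$ is implementable if there exists $\mathbf{p}>\mathbf{0}$ with $\mathbf{x}=\mathbf{f}(\mathbf{x};\mathbf{r},\mathbf{p})$; for given $\mathbf{x}$ and $\mathbf{r}$ such a power vector is unique. *)

(* Defs.v *)
From HB Require Import structures.
From mathcomp Require Import all_boot all_order all_algebra.
From mathcomp Require Import complex.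
From mathcomp Require Import reals exp.
Set Implicit Arguments. Unset Strict Implicit. Unset Printing Implicit Defensive.
Import Order.TTheory GRing.Theory Num.Theory.
Local Open Scope ring_scope.
Local Open Scope complex_scope.

Section Net.
Variables (R : realType) (n m : nat).
(* base stations 'I_n, users 'I_m, J i = set of users served by BS i,
   g k j = gain from BS k to user j, sigma2 = noise power. *)
Variables (J : 'I_n -> {set 'I_m}) (g : 'I_n -> 'I_m -> R) (sigma2 : R).

Definition Lambda (r : 'I_n -> 'I_m -> R) : 'M[R]_n :=
  \matrix_(i, k) (if i == k then 0
                  else \sum_(j in J i) g k j * r i j / g i j).

Definition spectral_radius_lt1 (A : 'M[R]_n) : Prop :=
  forall z : R[i], root (map_poly (fun a : R => a%:C) (char_poly A)) z ->
    `|z| < 1.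

Definition satisfiable (r : 'I_n -> 'I_m -> R) : Prop :=
  spectral_radius_lt1 (Lambda r).

Definition f (x : 'I_n -> R) (r : 'I_n -> 'I_m -> R) (p : 'I_n -> R)
    (i : 'I_n) : R :=
  \sum_(j in J i)
     r i j / ln (1 + p i * g i j /
                  (\sum_(k < n | k != i) p k * g k j * x k + sigma2)).

Definition implementable_with (x : 'I_n -> R) (r : 'I_n -> 'I_m -> R)
    (p : 'I_n -> R) : Prop :=
  (forall i, 0 < p i) /\ (forall i, x i = f x r p i).

Definition implementable (x : 'I_n -> R) (r : 'I_n -> 'I_m -> R) : Prop :=
  exists p, implementable_with x r p.
End Net.

(* Main.v *)
Require Import Defs.
From HB Require Import structures.
From mathcomp Require Import all_boot all_order all_algebra.
From mathcomp Require Import complex.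
From mathcomp Require Import reals exp.
Import Order.TTheory GRing.Theory Num.Theory.
Local Open Scope ring_scope.

Module H.
Set Implicit Arguments. Unset Strict Implicit.
From mathcomp Require Import boolp classical_sets topology normedtype sequences realfun.
From mathcomp Require Import ring lra.
Import numFieldNormedType.Exports.
Section Gen.
Variable R : realType.

Lemma ln1p_gt0 (s : R) : 0 < s -> 0 < ln (1 + s).
Proof. by move=> s0; apply: ln_gt0; rewrite ltrDl. Qed.

Lemma term_le (c s s' : R) : 0 < c -> 0 < s -> s <= s' ->
  c / ln (1 + s') <= c / ln (1 + s).
Proof.
move=> c0 s0 ss'; have s'0 : 0 < s' by apply: lt_le_trans ss'.
rewrite ler_pM2l // lef_pV2 ?posrE ?ln1p_gt0 //.
by rewrite ler_ln ?posrE ?addr_gt0 // lerD2l.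
Qed.

Lemma term_lt (c s s' : R) : 0 < c -> 0 < s -> s < s' ->
  c / ln (1 + s') < c / ln (1 + s).
Proof.
move=> c0 s0 ss'; have s'0 : 0 < s' by apply: lt_trans ss'.
rewrite ltr_pM2l // ltf_pV2 ?posrE ?ln1p_gt0 //.
by rewrite ltr_ln ?posrE ?addr_gt0 // ltrD2l.
Qed.

Lemma ln_le_lin (y : R) : 0 < y -> ln y <= y - 1.
Proof.
move=> y0; have := @le_ln1Dx R (y - 1); rewrite addrCA subrr addr0; apply.
by lra.
Qed.

Lemma ln_lt_lin (y : R) : 0 < y -> y != 1 -> ln y < y - 1.
Proof.
move=> y0 y1; set s := Num.sqrt y.
have s0 : 0 < s by rewrite sqrtr_gt0.
have ys : y = s * s by rewrite -expr2 sqr_sqrtr // ltW.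
have s1 : s != 1 by apply: contraNneq y1; rewrite ys => ->; rewrite mulr1.
rewrite ys lnM ?posrE //.
have h := ln_le_lin s0.
have : 0 < (s - 1) ^+ 2 by rewrite exprn_even_gt0 //= subr_eq0.
rewrite expr2 => hs; nra.
Qed.

Lemma concave_weak (t S : R) : 0 < t -> t <= 1 -> 0 < S ->
  t * ln (1 + S) <= ln (1 + t * S).
Proof.
move=> t0 t1 S0; set c := 1 + t * S.
have c0 : 0 < c by rewrite addr_gt0 // mulr_gt0.
have h1 := ln_le_lin (divr_gt0 (addr_gt0 ltr01 S0) c0).
have h2 : ln c^-1 <= c^-1 - 1 by apply: ln_le_lin; rewrite invr_gt0.
rewrite ln_div ?posrE ?addr_gt0 ?mulr_gt0 // in h1.
rewrite lnV ?posrE // in h2.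
have := lerD (ler_wpM2l (ltW t0) h1) (ler_wpM2l (_ : 0 <= 1 - t) h2).
rewrite subr_ge0 => /(_ t1).
have -> : t * ((1 + S) / c - 1) + (1 - t) * (c^-1 - 1) = 0.
  rewrite /c; field; by rewrite -/c gt_eqF.
move=> h; nra.
Qed.

Lemma concave_strict (t S : R) : 0 < t -> t < 1 -> 0 < S ->
  t * ln (1 + S) < ln (1 + t * S).
Proof.
move=> t0 t1 S0; set c := 1 + t * S.
have c0 : 0 < c by rewrite addr_gt0 // mulr_gt0.
have h1 := ln_le_lin (divr_gt0 (addr_gt0 ltr01 S0) c0).
have cn1 : c^-1 != 1.
  rewrite invr_eq1 /c -subr_eq0 addrC addKr mulf_neq0 // gt_eqF //.
have h2 : ln c^-1 < c^-1 - 1 by apply: ln_lt_lin; rewrite ?invr_gt0.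
rewrite ln_div ?posrE ?addr_gt0 ?mulr_gt0 // in h1.
rewrite lnV ?posrE // in h2.
have h3 : (1 - t) * (- ln c) < (1 - t) * (c^-1 - 1) by rewrite ltr_pM2l // subr_gt0.
have := ler_ltD (ler_wpM2l (ltW t0) h1) h3.
have -> : t * ((1 + S) / c - 1) + (1 - t) * (c^-1 - 1) = 0.
  rewrite /c; field; by rewrite -/c gt_eqF.
move=> h; nra.
Qed.

End Gen.
Section S.
Variables (R : realType) (m : nat).
Lemma cont_term (c b t : R) : 0 < b -> 0 < t ->
  {for t, continuous (fun u : R => c / ln (1 + u * b))}.
Proof.
move=> b0 t0.
have h1 : {for t, continuous (fun u : R => 1 + u * b)}.
  apply: continuousD; first exact: cst_continuous.
  apply: continuousM; [exact: cvg_id | exact: cst_continuous].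
have h2 : {for t, continuous (fun u : R => ln (1 + u * b))}.
  apply: (continuous_comp h1); apply: continuous_ln.
  by rewrite addr_gt0 // mulr_gt0.
apply: continuousM; first exact: cst_continuous.
apply: continuousV => //.
by rewrite gt_eqF // ln_gt0 // ltrDl mulr_gt0.
Qed.

Lemma cont_big (s : seq 'I_m) (P : pred 'I_m) (F : 'I_m -> R -> R) (t : R) :
  (forall j, P j -> {for t, continuous (F j)}) ->
  {for t, continuous (fun u => \sum_(j <- s | P j) F j u)}.
Proof.
move=> HF; elim: s => [|j s IH].
  have -> : (fun u => \sum_(j <- [::] | P j) F j u) = fun _ => 0.
    by apply: funext => u; rewrite big_nil.
  exact: cst_continuous.
have -> : (fun u => \sum_(j0 <- j :: s | P j0) F j0 u) =
   (fun u => (if P j then F j u else 0) + \sum_(j0 <- s | P j0) F j0 u).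
  by apply: funext => u; rewrite big_cons; case: (P j); rewrite ?add0r.
apply: continuousD => //.
case: (boolP (P j)) => Pj; first exact: HF.
exact: cst_continuous.
Qed.

Lemma cont_phi (A : {set 'I_m}) (c b : 'I_m -> R) t :
  (forall j, j \in A -> 0 < b j) -> 0 < t ->
  {for t, continuous (fun u : R => \sum_(j in A) c j / ln (1 + u * b j))}.
Proof.
move=> b0 t0; apply: (@cont_big _ _ (fun j u => c j / ln (1 + u * b j))).
by move=> j jA; apply: cont_term (b0 _ jA) t0.
Qed.
Lemma phi_root (A : {set 'I_m}) (c b : 'I_m -> R) (v : R) :
  (exists j, j \in A) -> (forall j, j \in A -> 0 < c j /\ 0 < b j) -> 0 < v ->
  exists2 t, 0 < t & \sum_(j in A) c j / ln (1 + t * b j) = v.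
Proof.
move=> [j0 j0A] Hcb v0.
pose phi := fun u : R => \sum_(j in A) c j / ln (1 + u * b j).
have [c0 b0] := Hcb _ j0A.
have term_ge0 : forall u, 0 < u -> forall j, j \in A -> 0 <= c j / ln (1 + u * b j).
  move=> u u0 j jA; have [cj bj] := Hcb _ jA.
  by apply: divr_ge0; [exact: ltW | apply: ltW; apply: ln1p_gt0; exact: mulr_gt0].
pose a := c j0 / (b j0 * v).
have a0 : 0 < a by apply: divr_gt0 => //; exact: mulr_gt0.
have phia : v <= phi a.
  rewrite /phi (bigD1 j0) //=.
  have h : 0 <= \sum_(j in A | j != j0) c j / ln (1 + a * b j).
    by apply: sumr_ge0 => j /andP[jA _]; exact: term_ge0.
  rewrite -[v]addr0; apply: lerD => //.
  have ab0 : 0 < a * b j0 by exact: mulr_gt0.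
  have -> : v = c j0 / (a * b j0) by rewrite /a; field; rewrite ?gt_eqF.
  rewrite ler_pM2l // lef_pV2 ?posrE ?ln1p_gt0 //.
  by apply: le_ln1Dx; apply: lt_trans ab0; rewrite ltrN10.
pose K := (\sum_(j in A) c j) / v.
have sc0 : 0 < \sum_(j in A) c j.
  rewrite (bigD1 j0) //=; apply: (lt_le_trans c0); rewrite lerDl.
  by apply: sumr_ge0 => j /andP[jA _]; have [/ltW] := Hcb _ jA.
have K0 : 0 < K by exact: divr_gt0.
pose B := expR K * \sum_(j in A) (b j)^-1.
pose b' := a + B.
have B0 : 0 <= B.
  apply: mulr_ge0; first exact: ltW (expR_gt0 _).
  by apply: sumr_ge0 => j jA; have [_ /ltW] := Hcb _ jA; rewrite invr_ge0.
have ab' : a <= b' by rewrite /b' lerDl.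
have b'0 : 0 < b' by exact: lt_le_trans ab'.
have phib : phi b' <= v.
  have -> : v = \sum_(j in A) c j / K by rewrite -mulr_suml /K; field; rewrite ?gt_eqF.
  apply: ler_sum => j jA; have [cj bj] := Hcb _ jA.
  rewrite ler_pM2l // lef_pV2 ?posrE ?ln1p_gt0 ?mulr_gt0 ?invr_gt0 //.
  have : expR K <= 1 + b' * b j.
    apply: (@le_trans _ _ (b' * b j)); last by rewrite lerDr.
    have Bb : B * b j <= b' * b j by rewrite ler_pM2r // /b' lerDr ltW.
    apply: (le_trans _ Bb).
    rewrite /B -mulrA; apply: ler_peMr; first exact: ltW (expR_gt0 _).
    rewrite (bigD1 j) //= mulrDl mulVf ?gt_eqF //.
    rewrite lerDl; apply: mulr_ge0; last exact: ltW.
    by apply: sumr_ge0 => k /andP[kA _]; have [_ /ltW] := Hcb _ kA; rewrite invr_ge0.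
  move=> h; rewrite -[X in X <= _]expRK ler_ln ?posrE ?expR_gt0 //.
  by rewrite addr_gt0 // mulr_gt0.
have cont : {within `[a, b'], continuous phi}%classic.
  apply: continuous_in_subspaceT => u; rewrite inE /= in_itv /= => /andP[au _].
  apply: cont_phi; last exact: lt_le_trans au.
  by move=> j jA; have [] := Hcb _ jA.
have hv : Num.min (phi a) (phi b') <= v <= Num.max (phi a) (phi b').
  by rewrite ge_min le_max phia phib orbT.
have [t tab phit] := IVT ab' cont hv.
exists t => //; move: tab; rewrite in_itv /= => /andP[ht _]; exact: lt_le_trans ht.
Qed.

Lemma sum_le (A : {set 'I_m}) (c s s' : 'I_m -> R) :
  (forall j, j \in A -> 0 < c j /\ 0 < s j /\ s j <= s' j) ->
  \sum_(j in A) c j / ln (1 + s' j) <= \sum_(j in A) c j / ln (1 + s j).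
Proof. by move=> H; apply: ler_sum => j /H [c0 [s0 ss]]; exact: term_le. Qed.

Lemma sum_lt (A : {set 'I_m}) (c s s' : 'I_m -> R) : (exists j, j \in A) ->
  (forall j, j \in A -> 0 < c j /\ 0 < s j /\ s j < s' j) ->
  \sum_(j in A) c j / ln (1 + s' j) < \sum_(j in A) c j / ln (1 + s j).
Proof.
move=> [j0 j0A] H; apply: ltr_sum.
  by apply/hasP; exists j0 => //; exact: mem_index_enum.
by move=> j /H [c0 [s0 ss]]; exact: term_lt.
Qed.

End S.

Lemma div_le_div (R : realType) (a d d' : R) : 0 < a -> 0 < d -> d <= d' -> a / d' <= a / d.
Proof.
move=> a0 d0 dd; have d'0 : 0 < d' by exact: lt_le_trans dd.
by rewrite ler_pM2l // lef_pV2 ?posrE.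
Qed.

Lemma div_lt_div (R : realType) (a d d' : R) : 0 < a -> 0 < d -> d < d' -> a / d' < a / d.
Proof.
move=> a0 d0 dd; have d'0 : 0 < d' by exact: lt_trans dd.
by rewrite ltr_pM2l // ltf_pV2 ?posrE.
Qed.

Lemma pp_term (R : realType) (c S t : R) : 0 < c -> 0 < S -> 0 < t -> t <= 1 ->
  c / ln (1 + t * S) <= t^-1 * (c / ln (1 + S)).
Proof.
move=> c0 S0 t0 t1; rewrite mulrCA -invfM; apply: div_le_div => //.
  by apply: mulr_gt0 => //; exact: ln1p_gt0.
exact: concave_weak.
Qed.

Lemma pp_term_lt (R : realType) (c S t : R) : 0 < c -> 0 < S -> 0 < t -> t < 1 ->
  c / ln (1 + t * S) < t^-1 * (c / ln (1 + S)).
Proof.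
move=> c0 S0 t0 t1; rewrite mulrCA -invfM; apply: div_lt_div => //.
  by apply: mulr_gt0 => //; exact: ln1p_gt0.
exact: concave_strict.
Qed.

Section Net.
Unset Implicit Arguments.
Variables (R : realType) (n m : nat) (J : 'I_n -> {set 'I_m}) (g : 'I_n -> 'I_m -> R)
  (sigma2 : R) (r : 'I_n -> 'I_m -> R).
Hypothesis HJ : forall i, exists j, j \in J i.
Hypothesis Hg : forall k j, 0 < g k j.
Hypothesis Hs : 0 < sigma2.
Hypothesis Hr : forall i j, j \in J i -> 0 < r i j.

Let F := f J g sigma2.

Definition D (x p : 'I_n -> R) i j := \sum_(k < n | k != i) p k * g k j * x k + sigma2.

Lemma fE x p i : F x r p i = \sum_(j in J i) r i j / ln (1 + p i * g i j / D x p i j).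
Proof. by []. Qed.

Let e3 (a b c : R) : a * b * c = b * (a * c). Proof. by ring. Qed.

Lemma D_le x y p q i j : (forall k, p k * x k <= q k * y k) -> D x p i j <= D y q i j.
Proof.
by move=> H; rewrite lerD2r; apply: ler_sum => k _; rewrite !e3 ler_pM2l.
Qed.

Lemma D_lt x y p q i j k0 : (forall k, p k * x k <= q k * y k) -> k0 != i ->
  p k0 * x k0 < q k0 * y k0 -> D x p i j < D y q i j.
Proof.
move=> H ki hk; rewrite ltrD2r (bigD1 k0) //= [X in _ < X](bigD1 k0) //=.
apply: ltr_leD; first by rewrite !e3 ltr_pM2l.
by apply: ler_sum => k _; rewrite !e3 ler_pM2l.
Qed.

Lemma D_gt0 x p i j : (forall k, 0 <= p k * x k) -> 0 < D x p i j.
Proof.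
move=> H; rewrite /D; apply: (lt_le_trans Hs); rewrite lerDr.
by apply: sumr_ge0 => k _; rewrite e3; apply: mulr_ge0 (ltW (Hg _ _)) _.
Qed.

Definition upd (p : 'I_n -> R) i t := fun k => if k == i then t else p k.

Lemma D_upd x p i t j : D x (upd p i t) i j = D x p i j.
Proof.
rewrite /D; congr (_ + _); apply: eq_bigr => k ki; by rewrite /upd (negbTE ki).
Qed.

Lemma f_upd x p i t : F x r (upd p i t) i =
  \sum_(j in J i) r i j / ln (1 + t * (g i j / D x p i j)).
Proof. rewrite fE; apply: eq_bigr => j _; by rewrite D_upd /upd eqxx mulrA. Qed.

Lemma upd_id p i : upd p i (p i) = p.
Proof. by apply: funext => k; rewrite /upd; case: eqP => [->|]. Qed.

Lemma upd_nonneg x p i t : (forall k, 0 < x k) -> (forall k, 0 <= p k) -> 0 <= t ->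
  forall k, 0 <= upd p i t k * x k.
Proof.
move=> Hx Hp t0 k; apply: mulr_ge0; last exact: ltW.
by rewrite /upd; case: eqP.
Qed.

Lemma f_upd_le x p i t t' : (forall k, 0 < x k) -> (forall k, 0 <= p k) ->
  0 < t -> t <= t' -> F x r (upd p i t') i <= F x r (upd p i t) i.
Proof.
move=> Hx Hp t0 tt; rewrite !f_upd; apply: sum_le => j jA.
have D0 : 0 < D x p i j.
  by apply: D_gt0 => k; apply: mulr_ge0 (Hp k) (ltW (Hx k)).
split; first exact: Hr.
split; first by apply: mulr_gt0 => //; exact: divr_gt0.
by rewrite ler_pM2r // divr_gt0.
Qed.

Lemma f_upd_lt x p i t t' : (forall k, 0 < x k) -> (forall k, 0 <= p k) ->
  0 < t -> t < t' -> F x r (upd p i t') i < F x r (upd p i t) i.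
Proof.
move=> Hx Hp t0 tt; rewrite !f_upd; apply: sum_lt => // j jA.
have D0 : 0 < D x p i j.
  by apply: D_gt0 => k; apply: mulr_ge0 (Hp k) (ltW (Hx k)).
split; first exact: Hr.
split; first by apply: mulr_gt0 => //; exact: divr_gt0.
by rewrite ltr_pM2r // divr_gt0.
Qed.

Definition cth x p i := inf [set t : R | 0 < t /\ F x r (upd p i t) i <= x i].

Lemma cth_spec x p i : (forall k, 0 < x k) -> (forall k, 0 <= p k) ->
  0 < cth x p i /\ F x r (upd p i (cth x p i)) i = x i.
Proof.
move=> Hx Hp.
have Dp j : 0 < D x p i j by apply: D_gt0 => k; apply: mulr_ge0 (Hp k) (ltW (Hx k)).
have Hcb : forall j, j \in J i -> 0 < r i j /\ 0 < g i j / D x p i j.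
  by move=> j jA; split; [exact: Hr | exact: divr_gt0].
have [t0 t00 ht0] := @phi_root R m (J i) (r i) (fun j => g i j / D x p i j) (x i)
  (HJ i) Hcb (Hx i).
move: ht0; rewrite -(f_upd x p i t0) => ht0.
set S := [set t : R | 0 < t /\ F x r (upd p i t) i <= x i]%classic.
have lb : lbound S t0.
  move=> t [t0' ht]; rewrite leNgt; apply/negP => tlt.
  have := f_upd_lt x p i t t0 Hx Hp t0' tlt; rewrite ht0 => h.
  by move: (lt_le_trans h ht); rewrite ltxx.
have St0 : S t0 by split => //; rewrite ht0.
have -> : cth x p i = t0.
  apply/le_anti/andP; split.
    by apply: ge_inf => //; exists t0.
  by apply: lb_le_inf => //; exists t0.
by [].
Qed.

Lemma cth_le x p i t : (forall k, 0 < x k) -> (forall k, 0 <= p k) -> 0 < t ->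
  F x r (upd p i t) i <= x i -> cth x p i <= t.
Proof.
move=> Hx Hp t0 ht; apply: ge_inf => //.
by exists 0 => u [u0 _]; exact: ltW.
Qed.

Lemma cth_ge x p i t : (forall k, 0 < x k) -> (forall k, 0 <= p k) ->
  cth x p i <= t -> F x r (upd p i t) i <= x i.
Proof.
move=> Hx Hp ct; have [c0 cE] := cth_spec x _ i Hx Hp.
by rewrite -[X in _ <= X]cE; apply: f_upd_le.
Qed.

Lemma cth_mono x p q i : (forall k, 0 < x k) -> (forall k, 0 <= p k) ->
  (forall k, p k <= q k) -> cth x p i <= cth x q i.
Proof.
move=> Hx Hp Hpq.
have Hq k : 0 <= q k by exact: le_trans (Hpq k).
have [c0 cE] := cth_spec x _ i Hx Hq.
apply: cth_le => //; rewrite -[X in _ <= X]cE !f_upd.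
apply: sum_le => j jA.
have nn p' : (forall k, 0 <= p' k) -> forall k, 0 <= p' k * x k.
  by move=> H k; apply: mulr_ge0 (H k) (ltW (Hx k)).
split; first exact: Hr.
split; first by apply: mulr_gt0 => //; apply: divr_gt0 => //; exact: D_gt0 (nn _ Hq).
rewrite ler_pM2l //; apply: div_le_div => //; first exact: D_gt0 (nn _ Hp).
by apply: D_le => k; rewrite ler_pM2r.
Qed.

Lemma exists_impl x q : (forall k, 0 < x k) -> (forall k, 0 < q k) ->
  (forall k, F x r q k <= x k) -> exists p, implementable_with J g sigma2 x r p.
Proof.
move=> Hx Hq Hqf.
pose FF := [set p : 'I_n -> R | (forall k, 0 < p k) /\ (forall k, F x r p k <= x k)]%classic.
pose Sk k := [set t : R | exists2 p, FF p & p k = t]%classic.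
pose ps k := inf (Sk k).
have Sne k : (Sk k !=set0)%classic by exists (q k); exists q.
have Slb k : has_lbound (Sk k) by exists 0 => t [p [pp _] <-]; exact: ltW.
have ps_le p k : FF p -> ps k <= p k by move=> Fp; apply: ge_inf => //; exists p.
have ps0 k : 0 <= ps k by apply: lb_le_inf => // t [p [pp _] <-]; exact: ltW.
pose cs k := cth x ps k.
have cs_spec k := cth_spec x ps k Hx ps0.
have cs_le k : cs k <= ps k.
  apply: lb_le_inf => // t [p [pp pf] <-].
  apply: (@le_trans _ _ (cth x p k)).
    by apply: cth_mono => // k'; exact: ps_le.
  by apply: cth_le => //; [move=> k'; exact: ltW | rewrite upd_id].
have cs0 k : 0 <= cs k by have [/ltW] := cs_spec k.
have csF : FF cs.
  split; first by move=> k; have [] := cs_spec k.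
  move=> k; rewrite -[X in F _ _ X](upd_id cs k); apply: cth_ge => //.
  exact: cth_mono.
have eq k : ps k = cs k by apply/le_anti; rewrite cs_le ps_le.
exists ps; split.
  by move=> k; rewrite eq; have [] := cs_spec k.
move=> k; have [_ E] := cs_spec k.
by rewrite -{1}E -/(cs k) -eq upd_id.
Qed.

Lemma cmp x p q : (forall k, 0 < x k) -> (forall k, 0 < p k) -> (forall k, 0 < q k) ->
  (forall k, x k = F x r p k) -> (forall k, F x r q k <= x k) -> forall i, p i <= q i.
Proof.
move=> Hx Hp Hq Hpf Hqf i; rewrite leNgt; apply/negP => qp.
have [i1 _ Hmax] := arg_maxP (fun k : 'I_n => p k / q k) (isT : predT i).
set al := p i1 / q i1.
have Hal k : p k / q k <= al := Hmax k isT.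
have al1 : 1 < al.
  by apply: (lt_le_trans _ (Hal i)); rewrite ltr_pdivlMr // mul1r.
have pk k : p k <= al * q k by have := Hal k; rewrite ler_pdivrMr // mulrC.
have pi1 : p i1 = al * q i1 by rewrite /al divfK // gt_eqF.
have al0 : 0 < al by exact: lt_trans al1.
have : F x r p i1 < F x r q i1.
  rewrite !fE; apply: sum_lt => // j jA.
  have Dq : 0 < D x q i1 j.
    by apply: D_gt0 => k; apply: mulr_ge0 (ltW (Hq k)) (ltW (Hx k)).
  have Dp : 0 < D x p i1 j.
    by apply: D_gt0 => k; apply: mulr_ge0 (ltW (Hp k)) (ltW (Hx k)).
  have Dlt : D x p i1 j < al * D x q i1 j.
    rewrite /D mulrDr; apply: ler_ltD.
      rewrite mulr_sumr; apply: ler_sum => k _.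
      rewrite (_ : al * (q k * g k j * x k) = (al * q k) * g k j * x k); last by ring.
      by rewrite ler_pM2r // ler_pM2r.
    by have := Hs; nra.
  split; first exact: Hr.
  split; first by rewrite divr_gt0 // mulr_gt0.
  rewrite pi1.
  rewrite (_ : q i1 * g i1 j / D x q i1 j = al * q i1 * g i1 j / (al * D x q i1 j)); last first.
    by field; rewrite !gt_eqF.
  by apply: div_lt_div => //; apply: mulr_gt0; [apply: mulr_gt0 | exact: Hg].
by rewrite -Hpf => h; have := lt_le_trans h (Hqf i1); rewrite ltxx.
Qed.

Definition ppv (p x x' : 'I_n -> R) k := p k * x k / x' k.

Lemma main x x' : (forall i, 0 < x i) -> (forall i, x i <= x' i) -> x' <> x ->
  implementable J g sigma2 x r ->
  implementable J g sigma2 x' r /\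
  (forall p p', implementable_with J g sigma2 x r p ->
               implementable_with J g sigma2 x' r p' ->
               forall i, p' i < p i).
Proof.
move=> Hx Hxx' Hne [p0 Hp0].
have [i0 Hi0] : exists i0, x i0 < x' i0.
  case: (pickP (fun i => x i < x' i)) => [i0 h|h]; first by exists i0.
  exfalso; apply: Hne; apply: funext => i; apply/eqP.
  by rewrite eq_le Hxx' andbT leNgt h.
have Hx' k : 0 < x' k by exact: lt_le_trans (Hx k) (Hxx' k).
have PP : forall p, implementable_with J g sigma2 x r p ->
   [/\ forall k, 0 < ppv p x x' k, forall k, ppv p x x' k <= p k,
       forall k, ppv p x x' k * x' k = p k * x k,
       forall k, F x' r (ppv p x x') k <= x' k &
       F x' r (ppv p x x') i0 < x' i0].
  move=> p [Hp Hpf0].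
  have Hpf : forall k, x k = F x r p k := Hpf0.
  have ppx k : ppv p x x' k * x' k = p k * x k by rewrite /ppv divfK // gt_eqF.
  have Dpp k j : D x' (ppv p x x') k j = D x p k j.
    by rewrite /D; congr (_ + _); apply: eq_bigr => k' _; rewrite [LHS]e3 [RHS]e3 ppx.
  have tk k : ppv p x x' k = (x k / x' k) * p k.
    by rewrite /ppv; ring.
  have bound k : F x' r (ppv p x x') k =
      \sum_(j in J k) r k j / ln (1 + (x k / x' k) * (p k * g k j / D x p k j)).
    by rewrite fE; apply: eq_bigr => j _; rewrite Dpp tk !mulrA.
  have xE k : (x k / x' k)^-1 * F x r p k = x' k.
    by rewrite -Hpf invf_div divfK // gt_eqF.
  have Sj k j : 0 < p k * g k j / D x p k j.
    rewrite divr_gt0 ?mulr_gt0 //.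
    by apply: D_gt0 => k'; apply: mulr_ge0 (ltW (Hp k')) (ltW (Hx k')).
  have t0 k : 0 < x k / x' k by rewrite divr_gt0.
  have t1 k : x k / x' k <= 1 by rewrite ler_pdivrMr // mul1r.
  split => //.
  - by move=> k; rewrite /ppv divr_gt0 // mulr_gt0.
  - by move=> k; rewrite tk ler_piMl // ltW.
  - move=> k; rewrite -[X in _ <= X]xE bound fE mulr_sumr.
    by apply: ler_sum => j jA; apply: pp_term => //; exact: Hr.
  - rewrite -[X in _ < X]xE bound fE mulr_sumr.
    apply: ltr_sum.
      by have [j jA] := HJ i0; apply/hasP; exists j => //; exact: mem_index_enum.
    move=> j jA; apply: pp_term_lt => //; first exact: Hr.
    by rewrite ltr_pdivrMr // mul1r.
split.
  have [pp0 _ _ ppf _] := PP p0 Hp0.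
  exact: (exists_impl x' (ppv p0 x x') Hx' pp0 ppf).
move=> p p' Hp [Hp'0 Hp'f0] i.
have Hp'f : forall k, x' k = F x' r p' k := Hp'f0.
have [pp0 ppp ppx ppf ppf0] := PP p Hp.
have [Hp0' Hpf0] := Hp.
have Hpf : forall k, x k = F x r p k := Hpf0.
have le := cmp x' p' (ppv p x x') Hx' Hp'0 pp0 Hp'f ppf.
have Dnn (q y : 'I_n -> R) k j : (forall k, 0 < q k) -> (forall k, 0 < y k) -> 0 < D y q k j.
  by move=> Hq Hy; apply: D_gt0 => k'; apply: mulr_ge0 (ltW (Hq k')) (ltW (Hy k')).
have lt0 : p' i0 < ppv p x x' i0.
  rewrite ltNge; apply/negP => h.
  have e : p' i0 = ppv p x x' i0 by apply/le_anti; rewrite le h.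
  have : F x' r p' i0 <= F x' r (ppv p x x') i0.
    rewrite !fE; apply: sum_le => j jA.
    split; first exact: Hr.
    split.
      apply: divr_gt0; [exact: mulr_gt0 | exact: (Dnn _ _ _ _ pp0 Hx')].
    rewrite e; apply: div_le_div; first exact: mulr_gt0.
      exact: (Dnn _ _ _ _ Hp'0 Hx').
    by apply: D_le => k; rewrite ler_pM2r.
  by rewrite -Hp'f => h2; have := le_lt_trans h2 ppf0; rewrite ltxx.
case: (eqVneq i i0) => [->|ne]; first exact: lt_le_trans lt0 (ppp i0).
rewrite ltNge; apply/negP => h.
have : F x' r p' i < F x r p i.
  rewrite !fE; apply: sum_lt => // j jA.
  split; first exact: Hr.
  split.
    apply: divr_gt0; [exact: mulr_gt0 | exact: (Dnn _ _ _ _ Hp0' Hx)].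
  apply: (@le_lt_trans _ _ (p' i * g i j / D x p i j)).
    by rewrite ler_pM2r ?invr_gt0 ?(Dnn _ _ _ _ Hp0' Hx) // ler_pM2r.
  apply: div_lt_div; first by rewrite mulr_gt0 // (lt_le_trans (Hp0' i)).
    exact: (Dnn _ _ _ _ Hp'0 Hx').
  apply: (D_lt _ _ _ _ _ _ i0).
  - by move=> k; rewrite -ppx ler_pM2r.
  - by rewrite eq_sym.
  - by rewrite -ppx ltr_pM2r.
by rewrite -Hp'f -Hpf => h2; have := lt_le_trans h2 (Hxx' i); rewrite ltxx.
Qed.

End Net.

End H.

Unset Implicit Arguments.
Set Strict Implicit.

Theorem theorem3 (R : realType) (n m : nat)
  (J : 'I_n -> {set 'I_m}) (g : 'I_n -> 'I_m -> R) (sigma2 : R)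
  (r : 'I_n -> 'I_m -> R) (x x' : 'I_n -> R) :
  (forall i, J i != set0) ->
  (forall i k, i != k -> [disjoint J i & J k]) ->
  (forall k j, 0 < g k j) ->
  0 < sigma2 ->
  (forall i j, j \in J i -> 0 < r i j) ->
  satisfiable J g r ->
  (forall i, 0 < x i) ->
  (forall i, x i <= x' i) ->
  x' <> x ->
  implementable J g sigma2 x r ->
  implementable J g sigma2 x' r /\
  (forall p p', implementable_with J g sigma2 x r p ->
               implementable_with J g sigma2 x' r p' ->
               forall i, p' i < p i).
Proof.
move=> HJ Hdisj Hg Hs Hr Hsat Hx Hxx Hne Himp.
apply: (@H.main R n m J g sigma2 r _ Hg Hs Hr x x' Hx Hxx Hne Himp).
by move=> i; apply/set0Pn.
Qed.
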